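(* Let $\mathcal A$ be a linearly ordered $\mathbf{UL}_\omega$-algebra. Let $B\subseteq A$ be finite with $\{e,f,\bot,\top\}\subseteq B$, and let $D$ be as described in the context. Then $D$ is finite.
   Context: A $\mathbf{UL}$-algebra is a structure $\langle A,\wedge,\vee,\cdot,\to,e,f,\bot,\top\rangle$ such that: - it is a bounded lattice; - $\langle A,\cdot,e\rangle$ is a commutative monoid; - $xy\le z$ iff $y\le x\to z$; - for all $x,y,u,v$: $\lambda_u((x\vee y)\to x)\vee\lambda_v((x\vee y)\to y)=e$, where $\lambda_a(b)=(a\to ba)\wedge e$. A $\mathbf{UL}_\omega$-algebra additionally satisfies $x\to e=x^2\to e$ for all $x$. This class includes $\mathbf{IUL}_\omega$-algebras. Construction. $M$ is the submonoid of $\langle A,\cdot,e\rangle$ generated by $B$. For $a\in M$ and $b\in B$, put $(a\mapsto b]=\{c\in M:ac\le b\}$. Let $\bar D=\{(a\mapsto b]:a\in M,b\in B\}$ and $D=\{\bigcap\chi:\chi\subseteq\bar D\}$, with the empty intersection equal to $M$. *)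

(* Defs.v *)
From mathcomp Require Import all_boot.
From mathcomp Require Import boolp classical_sets cardinality.
Set Implicit Arguments. Unset Strict Implicit. Unset Printing Implicit Defensive.
Local Open Scope classical_set_scope.

Record ULsig := {
  car :> Type;
  meet : car -> car -> car;
  join : car -> car -> car;
  mul  : car -> car -> car;
  imp  : car -> car -> car;
  unit_e : car;
  const_f : car;
  bot : car;
  top : car }.

Section Defs.
Variable A : ULsig.

Definition leA (x y : A) : Prop := meet x y = x.

Definition lambda (a b : A) : A := meet (imp a (mul b a)) (unit_e A).

Definition is_UL_algebra : Prop :=
  (forall x y z : A, meet x (meet y z) = meet (meet x y) z) /\
  (forall x y z : A, join x (join y z) = join (join x y) z) /\
  (forall x y : A, meet x y = meet y x) /\
  (forall x y : A, join x y = join y x) /\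
  (forall x y : A, meet x (join x y) = x) /\
  (forall x y : A, join x (meet x y) = x) /\
  (forall x : A, leA (bot A) x) /\
  (forall x : A, leA x (top A)) /\
  (forall x y z : A, mul x (mul y z) = mul (mul x y) z) /\
  (forall x y : A, mul x y = mul y x) /\
  (forall x : A, mul (unit_e A) x = x) /\
  (forall x y z : A, leA (mul x y) z <-> leA y (imp x z)) /\
  (forall x y u v : A,
     join (lambda u (imp (join x y) x)) (lambda v (imp (join x y) y)) = unit_e A).

Definition is_ULomega_algebra : Prop :=
  is_UL_algebra /\
  forall x : A, imp x (unit_e A) = imp (mul x x) (unit_e A).

Definition linearly_ordered : Prop := forall x y : A, leA x y \/ leA y x.

Inductive gen_monoid (B : set A) : A -> Prop :=
  | gm_unit : gen_monoid B (unit_e A)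
  | gm_base b : B b -> gen_monoid B b
  | gm_mul x y : gen_monoid B x -> gen_monoid B y -> gen_monoid B (mul x y).

Definition Mset (B : set A) : set A := [set x | gen_monoid B x].

(* (a |-> b] = {c in M : a c <= b} *)
Definition arr (B : set A) (a b : A) : set A :=
  [set c | Mset B c /\ leA (mul a c) b].

Definition Dbar (B : set A) : set (set A) :=
  [set X | exists a b, Mset B a /\ B b /\ X = arr B a b].

(* intersection of chi, with empty intersection equal to M *)
Definition bigcapM (B : set A) (chi : set (set A)) : set A :=
  [set c | Mset B c /\ forall Y, chi Y -> Y c].

Definition Dset (B : set A) : set (set A) :=
  [set X | exists chi, chi `<=` Dbar B /\ X = bigcapM B chi].

End Defs.

(* Main.v *)
Require Import Defs.
From mathcomp Require Import all_boot.
From mathcomp Require Import boolp classical_sets cardinality.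
From mathcomp Require Import functions zify.
Set Implicit Arguments. Unset Strict Implicit. Unset Printing Implicit Defensive.
Local Open Scope classical_set_scope.

Section Alg.
Variable A : ULsig.
Hypothesis HU : is_ULomega_algebra A.
Hypothesis HL : linearly_ordered A.

Local Notation e := (unit_e A).
Local Notation "x ⊙ y" := (Defs.mul x y) (at level 40, left associativity).
Local Notation "x <== y" := (leA x y) (at level 70).

Lemma meetA' (x y z : A) : Defs.meet x (Defs.meet y z) = Defs.meet (Defs.meet x y) z.
Proof. by case: HU => [[H _] _]; apply H. Qed.
Lemma meetC' (x y : A) : Defs.meet x y = Defs.meet y x.
Proof. by case: HU => [[_ [_ [H _]]] _]; apply H. Qed.
Lemma absorb1 (x y : A) : Defs.meet x (Defs.join x y) = x.
Proof. by case: HU => [[_ [_ [_ [_ [H _]]]]] _]; apply H. Qed.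
Lemma absorb2 (x y : A) : Defs.join x (Defs.meet x y) = x.
Proof. by case: HU => [[_ [_ [_ [_ [_ [H _]]]]]] _]; apply H. Qed.
Lemma mulA' (x y z : A) : x ⊙ (y ⊙ z) = (x ⊙ y) ⊙ z.
Proof. by case: HU => [[_ [_ [_ [_ [_ [_ [_ [_ [H _]]]]]]]]] _]; apply H. Qed.
Lemma mulC' (x y : A) : x ⊙ y = y ⊙ x.
Proof. by case: HU => [[_ [_ [_ [_ [_ [_ [_ [_ [_ [H _]]]]]]]]]] _]; apply H. Qed.
Lemma mul1' (x : A) : e ⊙ x = x.
Proof. by case: HU => [[_ [_ [_ [_ [_ [_ [_ [_ [_ [_ [H _]]]]]]]]]]] _]; apply H. Qed.
Lemma mulr1' (x : A) : x ⊙ e = x.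
Proof. by rewrite mulC' mul1'. Qed.
Lemma resid (x y z : A) : (x ⊙ y <== z) <-> (y <== Defs.imp x z).
Proof. by case: HU => [[_ [_ [_ [_ [_ [_ [_ [_ [_ [_ [_ [H _]]]]]]]]]]]] _]; apply H. Qed.
Lemma omega (x : A) : Defs.imp x e = Defs.imp (x ⊙ x) e.
Proof. by case: HU => _ H; apply H. Qed.

Lemma le_refl (x : A) : x <== x.
Proof. by rewrite /leA -{2}(absorb2 x x) absorb1. Qed.
Lemma le_trans (x y z : A) : x <== y -> y <== z -> x <== z.
Proof. by rewrite /leA => H1 H2; rewrite -H1 -meetA' H2. Qed.
Lemma le_anti (x y : A) : x <== y -> y <== x -> x = y.
Proof. by rewrite /leA => H1 H2; rewrite -H1 meetC' H2. Qed.

Lemma mul_monor (x y z : A) : x <== y -> z ⊙ x <== z ⊙ y.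
Proof.
move=> Hxy; apply/resid; apply: le_trans Hxy _; apply/resid; exact: le_refl.
Qed.
Lemma mul_monol (x y z : A) : x <== y -> x ⊙ z <== y ⊙ z.
Proof. by rewrite (mulC' x) (mulC' y); apply: mul_monor. Qed.
Lemma mul_mono (x y x' y' : A) : x <== x' -> y <== y' -> x ⊙ y <== x' ⊙ y'.
Proof. move=> H1 H2; apply: le_trans (mul_monol _ H1) (mul_monor _ H2). Qed.

Lemma omega2 (x y : A) : ((x ⊙ x) ⊙ y <== e) <-> (x ⊙ y <== e).
Proof. by split=> /resid H; apply/resid; [rewrite omega | rewrite -omega]. Qed.

Lemma lin (x y : A) : x <== y \/ y <== x.
Proof. exact: HL. Qed.

Lemma notle (x y : A) : ~ (x <== y) -> y <== x.
Proof. by case: (lin x y). Qed.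

Lemma CL1 (x1 x2 y : A) : x1 ⊙ y <== e -> x2 ⊙ y <== e -> (x1 ⊙ x2) ⊙ y <== e.
Proof.
have key : forall a b, a <== b -> a ⊙ y <== e -> b ⊙ y <== e -> (a ⊙ b) ⊙ y <== e.
  move=> a b ab _ Hb; apply: le_trans (mul_monol _ (mul_monol _ ab)) _.
  by apply/omega2.
move=> H1 H2; case: (lin x1 x2) => H; first exact: key.
by rewrite (mulC' x1 x2); apply: key.
Qed.

Lemma CL2 (x1 x2 y : A) : ~ (y ⊙ x1 <== e) -> ~ (y ⊙ x2 <== e) -> ~ (y ⊙ (x1 ⊙ x2) <== e).
Proof.
have key : forall a b, a <== b -> ~ (y ⊙ a <== e) -> ~ (y ⊙ (a ⊙ b) <== e).
  move=> a b ab Ha Hab; apply: Ha; rewrite mulC'; apply/omega2.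
  rewrite mulC'; apply: le_trans _ Hab; apply: mul_monor; exact: mul_monor.
move=> H1 H2; case: (lin x1 x2) => H; first exact: key.
by rewrite (mulC' x1 x2); apply: key.
Qed.


Fixpoint inw (x : A) (s : seq A) : Prop :=
  if s is y :: s' then y = x \/ inw x s' else False.
Definition valw (s : seq A) : A := foldr (fun a acc => a ⊙ acc) e s.

Lemma valw_cat s1 s2 : valw (s1 ++ s2) = valw s1 ⊙ valw s2.
Proof. elim: s1 => [|a s IH] /=; first by rewrite mul1'. by rewrite IH mulA'. Qed.

Lemma negdom_aux (m : A) w x : x ⊙ m <== e ->
  (forall l, inw l w -> l ⊙ m <== e) -> (x ⊙ valw w) ⊙ m <== e.
Proof.
elim: w x => [|l w IH] x /= Hx Hw; first by rewrite mulr1'.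
rewrite mulA'; apply: IH; last by move=> l' Hl'; apply: Hw; right.
by apply: CL1 => //; apply: Hw; left.
Qed.

Lemma negdom_aux2 (m : A) w x : inw m w -> x ⊙ m <== e ->
  (forall l, inw l w -> l ⊙ m <== e) -> x ⊙ valw w <== e.
Proof.
elim: w x => [|l w IH] x //= Hin Hx Hw.
case: Hin => [Hl|Hin].
  rewrite Hl (mulC' m) mulA'; apply: negdom_aux => //.
  by move=> l' Hl'; apply: Hw; right.
rewrite mulA'; apply: IH => //; last by move=> l' Hl'; apply: Hw; right.
by apply: CL1 => //; apply: Hw; left.
Qed.

Lemma neg_dom m w : m <== e -> inw m w ->
  (forall l, inw l w -> l ⊙ m <== e) -> valw w <== e.
Proof.
move=> H1 H2 H3; rewrite -[valw w]mul1'; apply: negdom_aux2 H2 _ H3.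
by rewrite mul1'.
Qed.

Lemma pos_step y z l : ~ (y ⊙ z <== e) -> (e <== l \/ ~ (y ⊙ l <== e)) ->
  ~ (y ⊙ (z ⊙ l) <== e).
Proof.
move=> Hz [Hl|Hl]; last exact: CL2.
move=> H; apply: Hz; apply: le_trans H; apply: mul_monor.
by rewrite -{1}(mulr1' z); apply: mul_monor.
Qed.

Lemma posdom_aux y w z : ~ (y ⊙ z <== e) ->
  (forall l, inw l w -> e <== l \/ ~ (y ⊙ l <== e)) -> ~ (y ⊙ (z ⊙ valw w) <== e).
Proof.
elim: w z => [|l w IH] z /= Hz Hw; first by rewrite mulr1'.
rewrite (mulA' z l); apply: IH; last by move=> l' Hl'; apply: Hw; right.
by apply: pos_step => //; apply: Hw; left.
Qed.

Lemma posdom_aux2 y w z : inw y w -> ~ (y ⊙ z <== e) ->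
  (forall l, inw l w -> e <== l \/ ~ (y ⊙ l <== e)) -> ~ (z ⊙ valw w <== e).
Proof.
elim: w z => [|l w IH] z //= Hin Hz Hw.
case: Hin => [Hl|Hin].
  rewrite Hl mulA' (mulC' z y) -mulA'; apply: posdom_aux => //.
  by move=> l' Hl'; apply: Hw; right.
rewrite mulA'; apply: IH => //; last by move=> l' Hl'; apply: Hw; right.
by apply: pos_step => //; apply: Hw; left.
Qed.

Lemma pos_dom y w : inw y w -> ~ (y <== e) ->
  (forall l, inw l w -> e <== l \/ ~ (y ⊙ l <== e)) -> e <== valw w.
Proof.
move=> H1 H2 H3; apply: notle; rewrite -[valw w]mul1'.
by apply: (posdom_aux2 H1) => //; rewrite mulr1'.
Qed.

Lemma all_pos w : (forall l, inw l w -> e <== l) -> e <== valw w.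
Proof.
elim: w => [|l w IH] /= H; first exact: le_refl.
rewrite -(mul1' e); apply: mul_mono; first by apply: H; left.
by apply: IH => l' Hl'; apply: H; right.
Qed.

Lemma max_letter w : w <> [::] -> exists y, inw y w /\ forall l, inw l w -> l <== y.
Proof.
elim: w => [|l w IH] // _.
case: w IH => [|l2 w] IH.
  by exists l; split; [left | move=> l' [<-|]//; exact: le_refl].
have [y [Hy Hm]] := IH ltac:(by []).
case: (lin l y) => Hly.
  exists y; split; first by right.
  by move=> l' [<-|Hl']; [|apply: Hm].
exists l; split; first by left.
by move=> l' [<-|Hl']; [exact: le_refl|apply: le_trans Hly; apply: Hm].
Qed.

Lemma dich w1 w2 : (forall x, inw x w1 <-> inw x w2) ->
  valw w1 <== e \/ e <== valw w2.
Proof.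
move=> Heq.
case: (EM (exists m, inw m w1 /\ m <== e /\ forall l, inw l w1 -> l ⊙ m <== e))
  => [[m [H1 [H2 H3]]]|Hn].
  by left; apply: neg_dom H2 H1 H3.
right.
have Hneg : forall m, inw m w2 -> m <== e -> exists l, inw l w2 /\ ~ (l ⊙ m <== e).
  move=> m Hm Hme; apply: contra_notP Hn => Hno; exists m; split; first exact/Heq.
  split=> // l Hl; apply: contra_notP Hno => Hlm; exists l; split=> //; exact/Heq.
case: (EM (exists m0, inw m0 w2 /\ ~ (e <== m0))) => [[m0 [Hm0 Hm0n]]|Hp]; last first.
  apply: all_pos => l Hl; apply: contra_notP Hp => Hl'; by exists l.
have Hm0e := notle Hm0n.
have [l0 [Hl0 Hl0n]] := Hneg _ Hm0 Hm0e.
have [y [Hy Hmax]] : exists y, inw y w2 /\ forall l, inw l w2 -> l <== y.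
  by apply: max_letter; case: (w2) Hm0.
apply: (pos_dom Hy).
  move=> Hye; apply: Hl0n; rewrite -(mul1' e); apply: mul_mono => //.
  exact: le_trans (Hmax _ Hl0) Hye.
move=> l Hl; case: (lin e l) => Hel; first by left.
right=> Hyl; have [l' [Hl' Hl'n]] := Hneg _ Hl Hel.
by apply: Hl'n; apply: le_trans Hyl; apply: mul_monol; apply: Hmax.
Qed.

Lemma mulACA' (a b c d : A) : (a ⊙ b) ⊙ (c ⊙ d) = (a ⊙ c) ⊙ (b ⊙ d).
Proof. by rewrite -!mulA' (mulA' b c d) (mulC' b c) -(mulA' c b d). Qed.

Lemma inw_cat a s1 s2 : inw a (s1 ++ s2) <-> inw a s1 \/ inw a s2.
Proof.
elim: s1 => [|x s IH] /=; first by split=> [H|[]//]; right.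
have := IH; tauto.
Qed.

Lemma inw_nseq a n b : inw a (nseq n b) <-> (0 < n)%N /\ b = a.
Proof. elim: n => [|n IH] /=; [by split=> [] [] | split=> [[E|/IH[_ E]]|[_ E]]; by [split|left]]. Qed.

Section Vec.
Variable gs : seq A.
Local Notation k := (size gs).
Definition gn i := nth e gs i.
Definition wordv (x : nat -> nat) : seq A :=
  flatten [seq nseq (x i) (gn i) | i <- iota 0 k].
Definition valv x := valw (wordv x).

Lemma valw_flatten (F : nat -> seq A) l :
  valw (flatten (map F l)) = foldr (fun i acc => valw (F i) ⊙ acc) e l.
Proof. by elim: l => [|i l IH] //=; rewrite valw_cat IH. Qed.

Lemma valvE x : valv x = foldr (fun i acc => valw (nseq (x i) (gn i)) ⊙ acc) e (iota 0 k).
Proof. exact: valw_flatten. Qed.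

Lemma valw_nseqD m n a : valw (nseq (m + n) a) = valw (nseq m a) ⊙ valw (nseq n a).
Proof. by rewrite nseqD valw_cat. Qed.

Lemma valvD x y : valv (fun i => x i + y i) = valv x ⊙ valv y.
Proof.
rewrite !valvE; elim: (iota 0 k) => [|i l IH] /=; first by rewrite mul1'.
by rewrite IH valw_nseqD mulACA'.
Qed.

Lemma valv_ext x y : (forall i, (i < k)%N -> x i = y i) -> valv x = valv y.
Proof.
move=> H; rewrite !valvE.
have : forall i, i \in iota 0 k -> x i = y i.
  by move=> i; rewrite mem_iota add0n => /andP[_ /H].
elim: (iota 0 k) => [|i l IH] //= Hl.
by rewrite IH ?Hl ?mem_head // => j Hj; apply: Hl; rewrite inE Hj orbT.
Qed.

Lemma valv0 : valv (fun _ => 0%N) = e.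
Proof. by rewrite valvE; elim: (iota 0 k) => [|i l IH] //=; rewrite IH mul1'. Qed.

Lemma valv_gen i : (i < k)%N -> valv (fun j => if j == i then 1%N else 0%N) = gn i.
Proof.
move=> Hi; rewrite valvE.
have : i \in iota 0 k by rewrite mem_iota.
have : uniq (iota 0 k) by apply: iota_uniq.
elim: (iota 0 k) => [|j l IH] //= /andP[Hj Hu] Hin.
case: eqP => [Eji|Nji].
  subst j; rewrite /= mulr1'.
  suff -> : foldr (fun i0 acc => valw (nseq (if i0 == i then 1%N else 0%N) (gn i0)) ⊙ acc) e l = e by rewrite mulr1'.
  elim: l Hj {Hu IH Hin} => [|j l IH'] //=; rewrite inE negb_or => /andP[Hij Hl].
  by rewrite eq_sym (negbTE Hij) /= IH' // mul1'.
by rewrite /= mul1' IH //; move: Hin; rewrite inE => /orP[/eqP E|//]; case: Nji.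
Qed.

Lemma inw_flatten a (F : nat -> seq A) l :
  inw a (flatten (map F l)) <-> exists i, i \in l /\ inw a (F i).
Proof.
elim: l => [|j l IH] /=; first by split=> // [[i []]].
rewrite inw_cat IH; split.
  by case=> [H|[i [Hi H]]]; [exists j; rewrite mem_head | exists i; rewrite inE Hi orbT].
move=> [i [Hi H]]; move: Hi; rewrite inE => /orP[/eqP E|Hi]; first by left; rewrite -E.
by right; exists i.
Qed.

Lemma inw_wordv a x : inw a (wordv x) <-> exists i, (i < k)%N /\ (0 < x i)%N /\ gn i = a.
Proof.
rewrite /wordv inw_flatten; split=> [[i [Hi /inw_nseq H]]|[i [Hi H]]].
  by exists i; move: Hi; rewrite mem_iota add0n => /andP[_ Hi].
by exists i; rewrite mem_iota add0n Hi; split=> //; apply/inw_nseq.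
Qed.

Lemma wordv_supp x y : (forall i, (i < k)%N -> (0 < x i)%N = (0 < y i)%N) ->
  forall a, inw a (wordv x) <-> inw a (wordv y).
Proof.
move=> H a; rewrite !inw_wordv.
by split=> [[i [Hi [Hx Hg]]]|[i [Hi [Hx Hg]]]]; exists i; rewrite ?H // -?H.
Qed.

Lemma dichv x y : (forall i, (i < k)%N -> (0 < x i)%N = (0 < y i)%N) ->
  valv x <== e \/ e <== valv y.
Proof. by move=> H; apply: dich; apply: wordv_supp. Qed.

Lemma repr_M (B : set A) : (forall b, B b -> exists i, (i < k)%N /\ gn i = b) ->
  forall a, Mset B a -> exists x, a = valv x.
Proof.
move=> HB a; elim=> [|b Bb|x y _ [vx ->] _ [vy ->]].
- by exists (fun _ => 0%N); rewrite valv0.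
- have [i [Hi <-]] := HB b Bb.
  by exists (fun j => if j == i then 1%N else 0%N); rewrite valv_gen.
- by exists (fun i => vx i + vy i); rewrite valvD.
Qed.

End Vec.

End Alg.



Definition incr (f : nat -> nat) := forall n, f n < f n.+1.

Lemma chain_le (h : nat -> nat) : (forall n, h n <= h n.+1) ->
  forall m n, m <= n -> h m <= h n.
Proof.
move=> H m n /subnK <-; elim: (n - m) => [|d IH] //=.
by apply: leq_trans IH _; rewrite addSn; apply: H.
Qed.

Lemma incr_lt f : incr f -> forall m n, m < n -> f m < f n.
Proof.
move=> H m n Hmn.
have Hs : forall n, f n <= f n.+1 by move=> p; apply: ltnW.
exact: leq_trans (H m) (chain_le Hs Hmn).
Qed.

Lemma incr_le f : incr f -> forall m n, m <= n -> f m <= f n.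
Proof. by move=> H; apply: chain_le => n; apply: ltnW. Qed.

Lemma min_tail (f : nat -> nat) N :
  exists n, N <= n /\ forall m, N <= m -> f n <= f m.
Proof.
have [//|H] := EM (exists n, N <= n /\ forall m, N <= m -> f n <= f m); exfalso.
suff : forall v n, N <= n -> f n = v -> False by move/(_ (f N) N (leqnn _) erefl).
elim/ltn_ind => v IH n Hn Hv.
have [m [Hm Hlt]] : exists m, (N <= m) /\ (f m < f n).
  apply: contra_notP H => H'; exists n; split=> // m Hm.
  rewrite leqNgt; apply/negP => Hlt; apply: H'; by exists m.
by apply: (IH (f m) _ m Hm erefl); rewrite -Hv.
Qed.

Lemma seq1 (f : nat -> nat) : exists phi, incr phi /\ forall n, f (phi n) <= f (phi n.+1).
Proof.
have [g Hg] := choice (min_tail f).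
pose phi := fix phi n := if n is n'.+1 then g (phi n').+1 else g 0.
have Hinc : incr phi by move=> n /=; case: (Hg (phi n).+1).
exists phi; split=> // n.
pose Nf n := if n is n'.+1 then (phi n').+1 else 0.
have Ephi : phi n = g (Nf n) by case: n.
case: (Hg (Nf n)) => HN Hmin; rewrite Ephi; apply: Hmin.
by apply: leq_trans HN _; rewrite -Ephi ltnW.
Qed.

Definition vle k (x y : nat -> nat) := forall i, i < k -> x i <= y i.

Lemma dickson k (s : nat -> nat -> nat) :
  exists phi, incr phi /\ forall m n, m <= n -> vle k (s (phi m)) (s (phi n)).
Proof.
elim: k => [|k [phi [Hphi Hmon]]].
  by exists id; split=> // m n _ i.
have [psi [Hpsi Hstep]] := seq1 (fun n => s (phi n) k).
exists (fun n => phi (psi n)); split.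
  by move=> n; apply: incr_lt Hphi _ _ (Hpsi n).
move=> m n Hmn i; rewrite ltnS leq_eqVlt => /orP[/eqP ->|Hi].
  exact: (chain_le (h := fun n => s (phi (psi n)) k)) Hstep _ _ Hmn.
by apply: Hmon => //; apply: incr_le.
Qed.

Lemma pigeon (T : finType) (col : nat -> T) :
  exists c phi, incr phi /\ forall n, col (phi n) = c.
Proof.
have [c Hc] : exists c, forall N, exists n, (N <= n) /\ col n = c.
  have [//|H] := EM (exists c, forall N, exists n, (N <= n) /\ col n = c); exfalso.
  have H' : forall c, exists N, forall n, N <= n -> col n <> c.
    move=> c; have [//|Hn] := EM (exists N, forall n, N <= n -> col n <> c); exfalso; apply: H; exists c => N.
    have [//|HN] := EM (exists n, (N <= n) /\ col n = c); exfalso.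
    apply: Hn; exists N => n Hn' Hcol; apply: HN; by exists n.
  have [Nf HN] := choice H'.
  apply: (HN (col (\max_(c : T) Nf c)) (\max_(c : T) Nf c)) => //.
  exact: leq_bigmax.
have [g Hg] := choice Hc.
pose phi := fix phi n := if n is n'.+1 then g (phi n').+1 else g 0.
exists c, phi; split; first by move=> n /=; case: (Hg (phi n).+1).
by case=> [|n] /=; [case: (Hg 0) | case: (Hg (phi n).+1)].
Qed.


Section Main.
Variable A : ULsig.
Hypothesis HU : is_ULomega_algebra A.
Hypothesis HL : linearly_ordered A.
Local Notation e := (unit_e A).
Local Notation "x ⊙ y" := (Defs.mul x y) (at level 40, left associativity).
Local Notation "x <== y" := (leA x y) (at level 70).
Variable gs : seq A.
Local Notation k := (size gs).
Local Notation valv := (valv gs).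

Lemma valv_split x y x' y' : vle k x x' -> vle k y y' ->
  valv x' ⊙ valv y' = (valv x ⊙ valv y) ⊙ valv (fun i => (x' i - x i) + (y' i - y i))%N.
Proof.
move=> Hx Hy.
rewrite (valvD HU) (mulACA' HU) -!(valvD HU).
apply: (valv_ext HU) => i Hi; have := Hx i Hi; have := Hy i Hi; lia.
Qed.

Variable B : set A.
Hypothesis HB : forall b, B b -> exists i, (i < k)%N /\ gn gs i = b.

Lemma slice_finite b : finite_set [set arr B a b | a in Mset B].
Proof.
set S := [set arr B a b | a in Mset B].
have [//|Hinf] := EM (finite_set S); exfalso.
have /pcard_leP/injfunPex [f Hf Hinj] := (infiniteP S).1 Hinf.
have Hw : forall n, exists x, arr B (valv x) b = f n.
  move=> n; have [a Ma Ea] := Hf n I.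
  by have [x Ex] := repr_M HU HB Ma; exists x; rewrite -Ex.
have [w Ew] := choice Hw.
have Hdist : forall m n, m <> n -> arr B (valv (w m)) b <> arr B (valv (w n)) b.
  move=> m n Hmn; rewrite !Ew => E; apply: Hmn; apply: Hinj E; by rewrite inE.
have [phi [Hphi Hmon]] := dickson k w.
pose W n := w (phi n).
pose X n := W (2 * n)%N.
pose Y n := W (2 * n).+1.
have HXY : forall n, arr B (valv (X n)) b <> arr B (valv (Y n)) b.
  by move=> n; apply: Hdist => E; move: (Hphi (2 * n)%N); rewrite E ltnn.
have Hwit : forall n, exists p : bool * (nat -> nat),
   if p.1 then (valv (X n) ⊙ valv p.2 <== b /\ ~ (valv (Y n) ⊙ valv p.2 <== b))
   else (valv (Y n) ⊙ valv p.2 <== b /\ ~ (valv (X n) ⊙ valv p.2 <== b)).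
  move=> n.
  have [c Hc] : exists c, ~ (arr B (valv (X n)) b c <-> arr B (valv (Y n)) b c).
    have [//|H] := EM (exists c, ~ (arr B (valv (X n)) b c <-> arr B (valv (Y n)) b c)).
    exfalso; apply: (HXY n); rewrite predeqE => c.
    have [//|Hc] := EM (arr B (valv (X n)) b c <-> arr B (valv (Y n)) b c).
    by exfalso; apply: H; exists c.
  case: (EM (arr B (valv (X n)) b c)) => [[Mc Hx]|Hnx].
  - have Hny : ~ (valv (Y n) ⊙ c <== b) by move=> Hy; apply: Hc; split=> // _; split.
    have [z Ez] := repr_M HU HB Mc.
    by exists (true, z); rewrite /= -Ez.
  - case: (EM (arr B (valv (Y n)) b c)) => [[Mc Hy]|Hny]; last first.
      by exfalso; apply: Hc; split.
    have Hnx' : ~ (valv (X n) ⊙ c <== b) by move=> Hx; apply: Hnx; split.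
    have [z Ez] := repr_M HU HB Mc.
    by exists (false, z); rewrite /= -Ez.
have [p Hp] := choice Hwit.
pose t n := (p n).1.
pose z n := (p n).2.
pose col n : bool * {set 'I_k} := (t n, finset (fun i : 'I_k => (0 < Y n i - X n i)%N)).
have [[t0 S0] [psi [Hpsi Hcol]]] := pigeon col.
have [phi2 [Hphi2 Hmon2]] := dickson k (fun m => z (psi (2 * m)%N)).
pose m := phi2 0.
pose m' := phi2 1.
have Hmm : (m < m')%N by apply: Hphi2.
have Hz : vle k (z (psi (2 * m)%N)) (z (psi (2 * m')%N)) := Hmon2 0 1 isT.
pose n := psi (2 * m)%N.
pose n2 := psi (2 * m).+1.
pose n' := psi (2 * m')%N.
have Hn12 : (n < n2)%N := Hpsi _.
have Hn23 : (n2 < n')%N by apply: (incr_lt Hpsi); rewrite /m /m'; lia.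
have Hs : forall q, col q = (t0, S0) -> t q = t0 /\
    forall i (Hi : (i < k)%N), (0 < Y q i - X q i)%N = (Ordinal Hi \in S0).
  by move=> q [-> <-]; split=> // i Hi; rewrite inE.
have [Ht1 Hs1] := Hs n (Hcol _).
have [Ht2 Hs2] := Hs n2 (Hcol _).
have [Ht3 Hs3] := Hs n' (Hcol _).
pose Q i := ((Y n' i - X n i) + (z n' i - z n i))%N.
pose Q' i := ((X n' i - Y n i) + (z n' i - z n i))%N.
have Hle : forall a c i, (a <= c)%N -> (i < k)%N -> (W a i <= W c i)%N.
  by move=> a c i Hac Hi; apply: Hmon.
have Hsupp : forall i, (i < k)%N -> (0 < Q i)%N = (0 < Q' i)%N.
  move=> i Hi.
  have h1 := Hle (2 * n)%N (2 * n).+1 i (leqnSn _) Hi.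
  have h2 := Hle (2 * n).+1 (2 * n2)%N i ltac:(lia) Hi.
  have h3 := Hle (2 * n2)%N (2 * n2).+1 i (leqnSn _) Hi.
  have h4 := Hle (2 * n2).+1 (2 * n')%N i ltac:(lia) Hi.
  have h5 := Hle (2 * n')%N (2 * n').+1 i (leqnSn _) Hi.
  have := Hs1 i Hi; have := Hs2 i Hi; have := Hs3 i Hi.
  rewrite /Q /Q' /X /Y.
  case: (Ordinal Hi \in S0) => s3 s2 s1.
    by apply/idP/idP => H; lia.
  move/negbT: s1 => s1; move/negbT: s2 => s2; move/negbT: s3 => s3.
  by apply/idP/idP => H; lia.
have HXn : vle k (X n) (Y n') by move=> i Hi; apply: Hle => //; lia.
have HYn : vle k (Y n) (X n') by move=> i Hi; apply: Hle => //; lia.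
have EqQ := valv_split HXn Hz.
have EqQ' := valv_split HYn Hz.
have Hpn := Hp n.
have Hpn' := Hp n'.
rewrite -/(t n) -/(t n') -/(z n) -/(z n') Ht1 Ht3 in Hpn Hpn'.
clear Hs Hcol Ht2.
case: t0 Ht1 Ht3 Hpn Hpn' => _ _ [H1 H2] [H3 H4].
- have [H|H] := dichv HU HL Hsupp.
  + apply: H4; rewrite EqQ; apply: (le_trans HU) H1.
    rewrite -[X in _ <== X](mulr1' HU); exact: (mul_monor HU).
  + apply: H2; apply: (le_trans HU) H3; rewrite EqQ'.
    rewrite -[X in X <== _](mulr1' HU); exact: (mul_monor HU).
- have Hsupp' : forall i, (i < k)%N -> (0 < Q' i)%N = (0 < Q i)%N.
    by move=> i Hi; rewrite Hsupp.
  have [H|H] := dichv HU HL Hsupp'.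
  + apply: H4; rewrite EqQ'; apply: (le_trans HU) H1.
    rewrite -[X in _ <== X](mulr1' HU); exact: (mul_monor HU).
  + apply: H2; apply: (le_trans HU) H3; rewrite EqQ.
    rewrite -[X in X <== _](mulr1' HU); exact: (mul_monor HU).
Qed.

End Main.

Unset Implicit Arguments.

Theorem lemma4p8 (A : ULsig) (B : set A) :
  is_ULomega_algebra A -> linearly_ordered A ->
  finite_set B ->
  [set unit_e A; const_f A; bot A; top A] `<=` B ->
  finite_set (Dset B).
Proof.
move=> HU HL HBf _.
have [gs Egs] := (@finite_seqP {classic A} B).1 HBf.
have HB : forall b, B b -> exists i, (i < size gs)%N /\ gn gs i = b.
  move=> b; rewrite Egs /= => Bb; exists (@index {classic A} b gs); split.
    by rewrite index_mem.
  exact: (@nth_index {classic A} (unit_e A) b gs Bb).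
have HDbar : finite_set (Dbar B).
  apply: (sub_finite_set (B := \bigcup_(b in B) [set arr B a b | a in Mset B])).
    by move=> X [a [b [Ma [Bb ->]]]]; exists b => //; exists a.
  apply: bigcup_finite => // b _; exact: (slice_finite HU HL HB b).
have [s Es] := (finite_seqP (Dbar B)).1 HDbar.
apply: (sub_finite_set
  (B := (fun m : (size s).-tuple bool => bigcapM B [set` (mask m s)]) @` setT)).
  move=> X [chi [Hchi ->]].
  exists (map_tuple (fun Y => `[< chi Y >]) (in_tuple s)) => //.
  congr (bigcapM B _); rewrite predeqE => Y /=.
  rewrite -filter_mask mem_filter; split.
    by move=> /andP[/asboolP].
  move=> cY; apply/andP; split; first exact/asboolP.
  by have := Hchi Y cY; rewrite Es.
by apply: finite_image; apply: finite_finset.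
Qed.
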